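(* Let $\ell$ be even and let $G$ be an $(n,\ell)$-extremal graph of even order $n$ such that the maximum degree of $\overline{G}$ is at most $2$. Then each connected component of $\overline{G}$ is isomorphic to either $P_2$ or $P_4$.
   Context: All graphs are finite and simple; $\overline{G}$ is the complement of $G$; $P_k$ is the path on $k$ vertices. Vertex labels lie in $\mathbb{Z}_\ell$ ($\ell\ge2$). In the neighborhood Lights Out game on $G$, toggling a vertex $v$ adds $1$ (mod $\ell$) to the label of each vertex of the closed neighborhood $N[v]$; the game is won when all labels are $0$. $G$ is $N$-AW if the game can be won from every initial labeling. $\max(n,\ell)$ is the maximum number of edges of an $N$-AW graph on $n$ vertices, and an $(n,\ell)$-extremal graph is an $N$-AW graph on $n$ vertices with $\max(n,\ell)$ edges. *)

(* Defs.v *)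
From mathcomp Require Import all_boot.
Set Implicit Arguments. Unset Strict Implicit. Unset Printing Implicit Defensive.

Definition simple_graph (n : nat) (e : rel 'I_n) : Prop :=
  irreflexive e /\ symmetric e.

Definition cnbhd (n : nat) (e : rel 'I_n) (v : 'I_n) : {set 'I_n} :=
  [set u | (u == v) || e v u].

(* Neighborhood Lights Out over Z_l (labels encoded as nat mod l):
   every initial labeling b can be cleared by toggling each vertex u
   x u times (toggling u adds 1 to every vertex of N[u]). *)
Definition N_AW (n l : nat) (e : rel 'I_n) : Prop :=
  forall b : 'I_n -> nat, exists x : 'I_n -> nat,
    forall v : 'I_n, (b v + \sum_(u in cnbhd e v) x u) %% l = 0.

Definition nedges (n : nat) (e : rel 'I_n) : nat :=
  #|[set p : 'I_n * 'I_n | (p.1 < p.2) && e p.1 p.2]|.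

Definition extremal (n l : nat) (e : rel 'I_n) : Prop :=
  simple_graph e /\ N_AW l e /\
  forall e' : rel 'I_n, simple_graph e' -> N_AW l e' -> nedges e' <= nedges e.

Definition compl_graph (n : nat) (e : rel 'I_n) : rel 'I_n :=
  fun x y => (x != y) && ~~ e x y.

Definition degree (n : nat) (e : rel 'I_n) (v : 'I_n) : nat :=
  #|[set u | e v u]|.

Definition component (n : nat) (e : rel 'I_n) (v : 'I_n) : {set 'I_n} :=
  [set u | connect e v u].

Definition induced_iso_path (n : nat) (e : rel 'I_n) (C : {set 'I_n}) (k : nat)
  : Prop :=
  exists f : 'I_k -> 'I_n,
    injective f /\ f @: setT = C /\
    forall i j : 'I_k, e (f i) (f j) = ((i.+1 == j) || (j.+1 == i)).

(* Main.v *)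
Require Import Defs.
From mathcomp Require Import all_boot all_algebra.
From mathcomp Require Import ring zify.
Set Implicit Arguments. Unset Strict Implicit. Unset Printing Implicit Defensive.
Import GRing.Theory.


Lemma Zl_nat0 (l k : nat) : 1 < l -> ((k%:R : 'Z_l) == 0)%R = (k %% l == 0).
Proof.
move=> hl; apply/eqP/eqP => [h|h].
  by rewrite -(val_Zp_nat hl) h.
by apply: val_inj; rewrite /= (val_Zp_nat hl) h.
Qed.

Lemma cnbhdC n (e : rel 'I_n) v u : (u \notin cnbhd e v) = compl_graph e v u.
Proof. by rewrite /cnbhd inE /compl_graph negb_or eq_sym. Qed.

Lemma sum_cnbhd n l (e : rel 'I_n) (x : 'I_n -> 'Z_l) v :
  (\sum_(u in cnbhd e v) x u = \sum_u x u - \sum_(u | compl_graph e v u) x u)%R.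
Proof.
have -> : (\sum_u x u = \sum_(u in cnbhd e v) x u + \sum_(u | compl_graph e v u) x u)%R.
  rewrite (bigID (mem (cnbhd e v)) predT) /=; congr (_ + _)%R.
  by apply: eq_bigl => u; rewrite cnbhdC.
by rewrite addrK.
Qed.

Definition FM n l (e : rel 'I_n) (x : {ffun 'I_n -> 'Z_l}) : {ffun 'I_n -> 'Z_l} :=
  [ffun v => \sum_(u in cnbhd e v) x u]%R.

Lemma NAW_ker n l (e : rel 'I_n) : 1 < l -> N_AW l e ->
  forall x : 'I_n -> 'Z_l,
  (forall v, \sum_u x u = \sum_(u | compl_graph e v u) x u)%R -> forall u, x u = 0%R.
Proof.
move=> hl naw x hx.
have surj : forall t : {ffun 'I_n -> 'Z_l}, exists X, FM e X = t.
  move=> t; have [xn hxn] := naw (fun v => val (- t v)%R).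
  exists [ffun u => (xn u)%:R]%R; apply/ffunP => v; rewrite ffunE.
  have := hxn v; move/eqP; rewrite -(Zl_nat0 _ hl) natrD natr_Zp natr_sum => /eqP h.
  rewrite (eq_bigr (fun u => (xn u)%:R))%R; last by move=> u _; rewrite ffunE.
  by move/eqP: h; rewrite addrC subr_eq0 => /eqP.
have gP : forall t : {ffun 'I_n -> 'Z_l}, {X | FM e X = t}.
  move=> t; case: (pickP [pred X | FM e X == t]) => [X /eqP h|h]; first by exists X.
  exfalso; have [X hX] := surj t; by have := h X; rewrite /= hX eqxx.
pose g t := sval (gP t).
have gK : cancel g (FM e) by move=> t; rewrite /g; case: (gP t).
have [g' g'1 g'2] := injF_bij (can_inj gK).
have Finj : injective (@FM n l e).
  have E : forall Z, FM e Z = g' Z by move=> Z; rewrite -{1}(g'2 Z) gK.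
  move=> X Y; rewrite !E; exact: (can_inj g'2).
have h0 : FM e (finfun x) = FM e [ffun _ => 0%R].
  apply/ffunP => v; rewrite !ffunE sum_cnbhd.
  have -> : (\sum_u finfun x u = \sum_u x u)%R by apply: eq_bigr => u _; rewrite ffunE.
  have -> : (\sum_(u | compl_graph e v u) finfun x u = \sum_(u | compl_graph e v u) x u)%R.
    by apply: eq_bigr => u _; rewrite ffunE.
  rewrite (hx v) subrr; symmetry; apply: big1 => u _; by rewrite ffunE.
move=> u; have := Finj _ _ h0 => /ffunP /(_ u); by rewrite !ffunE.
Qed.

Lemma ker_NAW n l (e : rel 'I_n) : 1 < l ->
  (forall x : 'I_n -> 'Z_l,
  (forall v, \sum_u x u = \sum_(u | compl_graph e v u) x u)%R -> forall u, x u = 0%R) ->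
  N_AW l e.
Proof.
move=> hl hk.
have Finj : injective (@FM n l e).
  move=> X Y hXY; apply/ffunP => u; apply/eqP; rewrite -subr_eq0; apply/eqP.
  apply: (hk (fun u => X u - Y u)%R) => v.
  have := congr1 (fun F : {ffun 'I_n -> 'Z_l} => F v) hXY; rewrite /= !ffunE.
  rewrite !sum_cnbhd !sumrB.
  move: (\sum_i X i)%R (\sum_i Y i)%R (\sum_(i | compl_graph e v i) X i)%R (\sum_(i | compl_graph e v i) Y i)%R.
  move=> a b c d h; have -> : a = (b - d + c)%R by rewrite -h; ring.
  ring.
have [g g1 g2] := injF_bij Finj.
move=> b; pose t := [ffun v => - (b v)%:R : 'Z_l]%R.
exists (fun u => val (g t u)) => v.
apply/eqP; rewrite -(Zl_nat0 _ hl) natrD natr_sum.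
rewrite (eq_bigr (fun u => g t u)); last by move=> u _; rewrite natr_Zp.
have := congr1 (fun F : {ffun 'I_n -> 'Z_l} => F v) (g2 t); rewrite /= !ffunE => ->.
by rewrite subrr.
Qed.


Lemma nbr_cases n (H : rel 'I_n) x a : H x a -> #|[set u | H x u]| <= 2 ->
  [set u | H x u] = [set a] \/ exists b, b != a /\ [set u | H x u] = [set a; b].
Proof.
set A := [set u | H x u] => hxa h2.
have ha : a \in A by rewrite inE.
have := cardsD1 a A; rewrite ha /= => hc.
have : #|A :\ a| <= 1 by move: h2; rewrite hc.
case: (leqP #|A :\ a| 0) => [h0 _|h1 h1'].
  left; apply/setP => z; rewrite in_set1.
  case: (boolP (z == a)) => [/eqP -> //|hz].
  have : z \notin A :\ a by move: h0; rewrite leqn0 cards_eq0 => /eqP ->; rewrite in_set0.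
  by rewrite in_setD1 hz /= => /negbTE.
have /cards1P [b hb] : #|A :\ a| == 1 by rewrite eqn_leq h1' h1.
right; exists b; split.
  have : b \in A :\ a by rewrite hb set11.
  by rewrite in_setD1 => /andP [].
by rewrite -(setD1K ha) hb.
Qed.

Lemma comp_eq n (H : rel 'I_n) : symmetric H -> forall x y,
  connect H x y -> component H x = component H y.
Proof.
move=> hs x y hxy; apply/setP => z; rewrite !inE.
have cs := sym_connect_sym hs.
apply/idP/idP => h.
  by apply: connect_trans h; rewrite cs.
exact: connect_trans hxy h.
Qed.

Lemma comp_closed n (H : rel 'I_n) : symmetric H -> forall x,
  closed H (mem (component H x)).
Proof.
move=> hs x a b hab; rewrite !inE.
exact: (connect_closed (sym_connect_sym hs) x hab).
Qed.

Lemma even_closed n (H : rel 'I_n) : symmetric H -> forall A : {set 'I_n},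
  closed H (mem A) -> (forall u, u \in A -> ~~ odd #|component H u|) -> ~~ odd #|A|.
Proof.
move=> hs A; move: {2}#|A| (leqnn #|A|) => k; elim: k A => [|k IH] A hk hcl hev.
  by move: hk; rewrite leqn0 => /eqP ->.
case: (set_0Vmem A) => [->|[a ha]]; first by rewrite cards0.
set C := component H a.
have sCA : C \subset A.
  apply/subsetP => z; rewrite inE => hz.
  by rewrite -(closed_connect hcl hz).
have hcard : #|A| = #|A :\: C| + #|C|.
  by rewrite cardsD (setIidPr sCA) subnK // subset_leq_card.
have haC : a \in C by rewrite inE connect0.
rewrite hcard oddD.
have -> : odd #|A :\: C| = false.
  apply/negbTE; apply: IH.
  - have : 0 < #|C| by apply/card_gt0P; exists a.
    move=> hC; move: hk; rewrite hcard => hk; lia.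
  - move=> x y hxy; rewrite !inE.
    have := comp_closed hs a hxy; rewrite !inE => ->.
    by rewrite (hcl x y hxy).
  - by move=> u; rewrite inE => /andP [_ /hev].
by rewrite /= hev.
Qed.

Lemma sum_ind n (R : nmodType) (P : pred 'I_n) (a : 'I_n) (F : 'I_n -> R) :
  (\sum_(u | P u) (if u == a then F u else 0) = if P a then F a else 0)%R.
Proof.
rewrite big_mkcond (bigD1 a) //= eqxx big1 ?addr0 // => u /negbTE ->.
by case: (P u).
Qed.

Lemma nedges_eq n (e1 e2 : rel 'I_n) : (forall a b, e1 a b = e2 a b) -> nedges e1 = nedges e2.
Proof. by move=> h; rewrite /nedges; apply: eq_card => p; rewrite !inE h. Qed.

Definition addE n (e : rel 'I_n) (x y : 'I_n) : rel 'I_n :=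
  fun a b => e a b || ((a == x) && (b == y)) || ((a == y) && (b == x)).

Lemma nedges_add n (e : rel 'I_n) x y : x != y -> ~~ e x y -> symmetric e ->
  nedges (addE e x y) = (nedges e).+1.
Proof.
move=> hxy hexy hs.
wlog lt : x y hxy hexy / x < y.
  move=> W; case: (ltngtP x y) => h; first exact: W.
  - rewrite (nedges_eq (e2 := addE e y x)); last first.
      by move=> a b; rewrite /addE -orbA [X in _ || X]orbC orbA.
    by apply: W; rewrite // 1?eq_sym // hs.
  - by move: hxy; rewrite (val_inj h) eqxx.
rewrite /nedges.
have -> : [set p : 'I_n * 'I_n | (p.1 < p.2) && addE e x y p.1 p.2] =
  (x, y) |: [set p : 'I_n * 'I_n | (p.1 < p.2) && e p.1 p.2].
  apply/setP => [[a b]]; rewrite !inE /= /addE /= xpair_eqE.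
  case: (boolP ((a == x) && (b == y))) => [/andP [/eqP -> /eqP ->]|hn].
    by rewrite lt !orbT.
  case: (boolP ((a == y) && (b == x))) => [/andP [/eqP -> /eqP ->]|hn2].
    by rewrite ltnNge (ltnW lt).
  by rewrite !orbF.
rewrite cardsU1 inE /= (negbTE hexy) andbF.
by rewrite add1n.
Qed.


Lemma compl_sym n (e : rel 'I_n) : symmetric e -> symmetric (compl_graph e).
Proof. by move=> hs x y; rewrite /compl_graph eq_sym hs. Qed.

Lemma compl_irr n (e : rel 'I_n) x : compl_graph e x x = false.
Proof. by rewrite /compl_graph eqxx. Qed.

Lemma one_neq0 l : 1 < l -> (1 : 'Z_l)%R != 0%R.
Proof. by move=> hl; have := Zl_nat0 1 hl; rewrite modn_small // => /negbT; apply. Qed.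

Lemma sum_pred2 n (R : nmodType) (a b : 'I_n) (F : 'I_n -> R) : a != b ->
  (\sum_(u | (u == a) || (u == b)) F u = F a + F b)%R.
Proof.
move=> hab; rewrite (bigD1 a) /= ?eqxx //; congr (_ + _)%R.
rewrite (eq_bigl (fun u => u == b)) ?big_pred1_eq // => u.
case: (u =P b) => [->|hb]; first by rewrite orbT eq_sym hab.
by rewrite orbF andbN.
Qed.

Lemma twins n l (e : rel 'I_n) : 1 < l -> simple_graph e -> N_AW l e ->
  forall a b, a != b -> (forall z, compl_graph e a z = compl_graph e b z) -> False.
Proof.
move=> hl [hirr hs] naw a b hab htw.
have Hs := compl_sym hs.
pose x u := ((if u == a then 1 else 0) - (if u == b then 1 else 0) : 'Z_l)%R.
have hx : forall v, (\sum_u x u = \sum_(u | compl_graph e v u) x u)%R.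
  move=> v; rewrite !sumrB.
  rewrite (sum_ind xpredT a (fun _ => 1%R)) (sum_ind xpredT b (fun _ => 1%R)).
  rewrite (sum_ind _ a (fun _ => 1%R)) (sum_ind _ b (fun _ => 1%R)).
  by rewrite /= subrr Hs htw Hs subrr.
have := NAW_ker hl naw hx a; rewrite /x eqxx (negbTE hab) subr0 => /eqP.
by rewrite (negbTE (one_neq0 hl)).
Qed.


Lemma no_long n l (e : rel 'I_n) : 1 < l -> extremal l e ->
  forall w0 w1 w2 w3 w4 : 'I_n,
  [set u | compl_graph e w0 u] = [set w1] ->
  [set u | compl_graph e w2 u] = [set w1; w3] ->
  w1 != w3 -> compl_graph e w3 w4 ->
  w0 != w3 -> w0 != w4 -> w2 != w3 -> w2 != w4 -> False.
Proof.
move=> hl [[hirr hs] [naw hmax]] w0 w1 w2 w3 w4 hN0 hN2 d13 h34 d03 d04 d23 d24.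
have Hs := compl_sym hs.
have H0' : forall u, compl_graph e w0 u = (u == w1).
  by move=> u; move/setP: hN0 => /(_ u); rewrite !inE.
have H2' : forall u, compl_graph e w2 u = (u == w1) || (u == w3).
  by move=> u; move/setP: hN2 => /(_ u); rewrite !inE.
have H0 : forall v, compl_graph e v w0 = (v == w1) by move=> v; rewrite Hs.
have H2 : forall v, compl_graph e v w2 = (v == w1) || (v == w3) by move=> v; rewrite Hs.
have d34 : w3 != w4 by move: h34; rewrite /compl_graph => /andP [].
have ne34 : ~~ e w3 w4 by move: h34; rewrite /compl_graph => /andP [].
pose e' := addE e w3 w4.
have simple' : simple_graph e'.
  split.
    move=> x; rewrite /e' /addE hirr /=.
    case: (x =P w3) => [->|_] /=; first by rewrite (negbTE d34) ?andbF ?andbT.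
    by rewrite andbF.
  by move=> x y; rewrite /e' /addE (hs x y) [(y == w3) && _]andbC [(y == w4) && _]andbC orbAC.
have H'E : forall v u, compl_graph e' v u =
    compl_graph e v u && ~~ (((v == w3) && (u == w4)) || ((v == w4) && (u == w3))).
  by move=> v u; rewrite /compl_graph /e' /addE -orbA negb_or andbA.
have hsplit : forall v (z : 'I_n -> 'Z_l),
    (\sum_(u | compl_graph e v u) z u = \sum_(u | compl_graph e' v u) z u
       + (if v == w3 then z w4 else 0) + (if v == w4 then z w3 else 0))%R.
  move=> v z.
  rewrite (bigID (fun u => ((v == w3) && (u == w4)) || ((v == w4) && (u == w3)))) /=.
  rewrite addrC -addrA; congr (_ + _)%R; first by apply: eq_bigl => u; rewrite H'E.
  case: (v =P w3) => [->|n3].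
    rewrite (negbTE d34) /= addr0 (eq_bigl (fun u => u == w4)) ?big_pred1_eq //.
    by move=> u; case: (u =P w4) => [->|]; [rewrite h34|rewrite andbF].
  case: (v =P w4) => [->|n4].
    rewrite /= add0r (eq_bigl (fun u => u == w3)) ?big_pred1_eq //.
    move=> u; case: (u =P w3) => [->|]; last by rewrite andbF.
    by rewrite Hs h34.
  by rewrite add0r big_pred0 // => u; rewrite andbF.
have NAW' : N_AW l e'.
  apply: (ker_NAW (hl)) => x hx.
  have hH'0 : forall u, compl_graph e' w0 u = (u == w1).
    by move=> u; rewrite H'E H0' (negbTE d03) (negbTE d04) /= andbT.
  have hH'2 : forall u, compl_graph e' w2 u = (u == w1) || (u == w3).
    by move=> u; rewrite H'E H2' (negbTE d23) (negbTE d24) /= andbT.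
  have x3 : x w3 = 0%R.
    have h0 := hx w0; rewrite (eq_bigl _ _ hH'0) big_pred1_eq in h0.
    have h2 := hx w2; rewrite (eq_bigl _ _ hH'2) sum_pred2 // h0 in h2.
    by apply: (addrI (x w1)); rewrite addr0 -h2.
  pose c := x w4.
  pose y u := (x u + c * ((if u == w0 then 1 else 0) - (if u == w2 then 1 else 0)))%R.
  have sumy : forall P : pred 'I_n, (\sum_(u | P u) y u = \sum_(u | P u) x u +
      c * ((if P w0 then 1 else 0) - (if P w2 then 1 else 0)))%R.
    move=> P; rewrite big_split /= -mulr_sumr sumrB.
    by rewrite (sum_ind P w0 (fun _ => 1%R)) (sum_ind P w2 (fun _ => 1%R)).
  have hy : forall v, (\sum_u y u = \sum_(u | compl_graph e v u) y u)%R.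
    move=> v; rewrite !sumy hsplit -(hx v) x3 H0 H2 /=.
    case h1: (v == w1); case h3: (v == w3); case h4: (v == w4) => /=; rewrite /c; try ring.
    all: try by move: d13; rewrite -(eqP h1) -(eqP h3) eqxx.
  have y0 := NAW_ker hl naw hy.
  have c0 : c = 0%R.
    have := y0 w4; rewrite /y eq_sym (negbTE d04) eq_sym (negbTE d24) subrr mulr0 addr0.
    by [].
  by move=> u; have := y0 u; rewrite /y c0 mul0r addr0.
have := hmax e' simple' NAW'.
by rewrite nedges_add // ltnn.
Qed.


Lemma iso_of_seq n (H : rel 'I_n) (s : seq 'I_n) (z : 'I_n) K :
  size s = K -> uniq s ->
  (forall i j : 'I_K, H (nth z s i) (nth z s j) = (i.+1 == j) || (j.+1 == i)) ->
  induced_iso_path H [set x in s] K.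
Proof.
move=> hsz hu hadj; exists (fun i : 'I_K => nth z s i); split; last split => //.
  move=> i j /eqP; rewrite nth_uniq ?hsz // => /eqP h; exact: val_inj.
apply/setP => x; rewrite inE; apply/imsetP/idP => [[i _ ->]|hx].
  by apply: mem_nth; rewrite hsz.
have hi : index x s < K by rewrite -hsz index_mem.
by exists (Ordinal hi) => //=; rewrite nth_index.
Qed.

Lemma comp_is n (H : rel 'I_n) (T : {set 'I_n}) u w0 : symmetric H ->
  (forall t w, t \in T -> H t w -> w \in T) -> w0 \in T ->
  (forall t, t \in T -> connect H w0 t) -> w0 \in component H u ->
  component H u = T.
Proof.
move=> hs hcl h0 hc hu.
rewrite inE in hu; rewrite (comp_eq hs hu).
have clT : closed H (mem T).
  move=> x y hxy; apply/idP/idP => h; first exact: hcl hxy.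
  by apply: (hcl y) => //; rewrite hs.
apply/setP => z; rewrite inE; apply/idP/idP => [hz|]; last exact: hc.
by rewrite -(closed_connect clT hz).
Qed.

Lemma walk n l (e : rel 'I_n) : 1 < l -> extremal l e ->
  (forall v, degree (compl_graph e) v <= 2) ->
  forall u w0, w0 \in component (compl_graph e) u -> degree (compl_graph e) w0 = 1 ->
  induced_iso_path (compl_graph e) (component (compl_graph e) u) 2 \/
  induced_iso_path (compl_graph e) (component (compl_graph e) u) 4.
Proof.
move=> hl hext hdeg u w0 hw0 hd0.
have [[hirr hs] [naw hmax]] := hext.
set H := compl_graph e.
have Hs : symmetric H := compl_sym hs.
have Hirr : forall x, H x x = false := compl_irr e.
have [w1 hN0] : exists w1, [set z | H w0 z] = [set w1] by apply/cards1P; rewrite -/(degree H w0) hd0.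
have H0' : forall z, H w0 z = (z == w1) by move=> z; move/setP: hN0 => /(_ z); rewrite !inE.
have h01 : H w0 w1 by rewrite H0'.
have d01 : w0 != w1 by apply/eqP => h; move: h01; rewrite h Hirr.
have d10 : w1 != w0 by rewrite eq_sym.
have h10 : H w1 w0 by rewrite Hs.
have [hN1|[w2 [d20 hN1]]] := nbr_cases (x := w1) (a := w0) (H := H) h10 (hdeg w1).
  have H1' : forall z, H w1 z = (z == w0) by move=> z; move/setP: hN1 => /(_ z); rewrite !inE.
  left.
  have -> : component H u = [set x in [:: w0; w1]].
    apply: (comp_is (w0 := w0)) => //.
    - move=> t w; rewrite !inE => /orP [] /eqP ->; [rewrite H0'|rewrite H1'] => ->; by rewrite ?orbT.
    - by rewrite !inE eqxx.
    - move=> t; rewrite !inE => /orP [] /eqP ->; [exact: connect0|exact: connect1].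
  apply: (iso_of_seq (z := w0)) => //=; first by rewrite inE d01.
  move=> [[|[|i]] hi] [[|[|j]] hj] //=; by rewrite ?H0' ?H1' ?Hirr ?eqxx ?(negbTE d01) ?(negbTE d10).
have H1' : forall z, H w1 z = (z == w0) || (z == w2).
  by move=> z; move/setP: hN1 => /(_ z); rewrite !inE.
have h12 : H w1 w2 by rewrite H1' eqxx orbT.
have h21 : H w2 w1 by rewrite Hs.
have d12 : w1 != w2 by apply/eqP => h; move: h12; rewrite h Hirr.
have d21 : w2 != w1 by rewrite eq_sym.
have d02 : w0 != w2 by rewrite eq_sym.
have [hN2|[w3 [d31 hN2]]] := nbr_cases (H := H) h21 (hdeg w2).
  exfalso; apply: (twins hl (conj hirr hs) naw d02) => z.
  by rewrite -/H H0'; move/setP: hN2 => /(_ z); rewrite !inE.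
have H2' : forall z, H w2 z = (z == w1) || (z == w3).
  by move=> z; move/setP: hN2 => /(_ z); rewrite !inE.
have h23 : H w2 w3 by rewrite H2' eqxx orbT.
have h32 : H w3 w2 by rewrite Hs.
have d23 : w2 != w3 by apply/eqP => h; move: h23; rewrite h Hirr.
have d32 : w3 != w2 by rewrite eq_sym.
have d13 : w1 != w3 by rewrite eq_sym.
have d03 : w0 != w3.
  by apply/eqP => h; move: h23; rewrite -h Hs H0' (negbTE d21).
have d30 : w3 != w0 by rewrite eq_sym.
have [hN3|[w4 [d42 hN3]]] := nbr_cases (H := H) h32 (hdeg w3).
  have H3' : forall z, H w3 z = (z == w2) by move=> z; move/setP: hN3 => /(_ z); rewrite !inE.
  right.
  have -> : component H u = [set x in [:: w0; w1; w2; w3]].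
    apply: (comp_is (w0 := w0)) => //.
    - move=> t w; rewrite !inE => /or4P [] /eqP ->;
        [rewrite H0'|rewrite H1'|rewrite H2'|rewrite H3'] => /= h;
        repeat (case/orP: h => h); by rewrite h ?orbT.
    - by rewrite !inE eqxx.
    - move=> t; rewrite !inE => /or4P [] /eqP ->; first exact: connect0.
      + exact: connect1.
      + exact: connect_trans (connect1 h01) (connect1 h12).
      + exact: connect_trans (connect_trans (connect1 h01) (connect1 h12)) (connect1 h23).
  apply: (iso_of_seq (z := w0)) => //=.
    by rewrite !inE negb_or !negb_or d01 d02 d03 d12 d13 d23.
  move=> [[|[|[|[|i]]]] hi] [[|[|[|[|j]]]] hj] //=;
  by rewrite ?H0' ?H1' ?H2' ?H3' ?Hirr ?eqxx ?(negbTE d01) ?(negbTE d10) ?(negbTE d02)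
     ?(negbTE d20) ?(negbTE d03) ?(negbTE d30) ?(negbTE d12) ?(negbTE d21) ?(negbTE d13)
     ?(negbTE d31) ?(negbTE d23) ?(negbTE d32).
have H3' : forall z, H w3 z = (z == w2) || (z == w4).
  by move=> z; move/setP: hN3 => /(_ z); rewrite !inE.
have h34 : H w3 w4 by rewrite H3' eqxx orbT.
have d04 : w0 != w4.
  by apply/eqP => h; move: h34; rewrite -h Hs H0' (negbTE d31).
exfalso; apply: (no_long hl hext hN0 hN2 d13 h34 d03 d04 d23).
by rewrite eq_sym.
Qed.


Lemma iso_card n (H : rel 'I_n) C K : induced_iso_path H C K -> #|C| = K.
Proof. by move=> [f [finj [<- _]]]; rewrite card_imset // cardsT card_ord. Qed.

Theorem theorem4p9 (n l : nat) (e : rel 'I_n) :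
  2 <= l -> ~~ odd l -> ~~ odd n ->
  extremal l e ->
  (forall v : 'I_n, degree (compl_graph e) v <= 2) ->
  forall v : 'I_n,
    induced_iso_path (compl_graph e) (component (compl_graph e) v) 2 \/
    induced_iso_path (compl_graph e) (component (compl_graph e) v) 4.
Proof.
move=> hl2 hlev hnev hext hdeg v.
have hl : 1 < l by [].
have [[hirr hs] [naw hmax]] := hext.
set H := compl_graph e.
have Hs : symmetric H := compl_sym hs.
have [U hU] : {U : {set 'I_n} | forall u, (u \in U) = [forall w in component H u, degree H w != 1]}.
  by exists [set u | [forall w in component H u, degree H w != 1]] => u; rewrite inE.
have notU : forall u, u \notin U -> exists2 w0, w0 \in component H u & degree H w0 = 1.
  move=> u; rewrite hU => /forall_inPn [w hw /negPn /eqP hd]; by exists w.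
suff hv : v \notin U.
  have [w0 hw0 hd0] := notU v hv; have := walk hl hext hdeg hw0 hd0; exact.
apply/negP => hvU.
have Ucl : forall x y, H x y -> (x \in U) = (y \in U).
  by move=> x y hxy; rewrite !hU (comp_eq Hs (connect1 hxy)).
have evC : ~~ odd #|~: U|.
  apply: (even_closed Hs).
    by move=> x y hxy; rewrite !in_setC (Ucl x y hxy).
  move=> u; rewrite in_setC => hu; have [w0 hw0 hd0] := notU u hu.
  by case: (walk hl hext hdeg hw0 hd0) => /iso_card ->.
have evU : ~~ odd #|U|.
  have hc := cardsC U; rewrite card_ord in hc.
  have : ~~ odd (#|U| + #|~: U|) by rewrite hc.
  by rewrite oddD; move: evC; case: (odd #|~: U|); case: (odd #|U|).
pose h : 'Z_l := (l./2)%:R%R.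
have hlh : l./2 * 2 = l by rewrite muln2 even_halfK.
have h2 : (h *+ 2 = 0)%R.
  by rewrite /h -mulrnA hlh; apply/eqP; rewrite (Zl_nat0 l hl) modnn.
have hev : forall k, ~~ odd k -> (h *+ k = 0)%R.
  move=> k hk; rewrite -(even_halfK hk) -muln2 mulnC mulrnA h2 mul0rn //.
have hne : h != 0%R.
  rewrite /h (Zl_nat0 _ hl); move: hlh; set m := l./2 => hm.
  rewrite modn_small; last lia.
  have : 0 < m by lia.
  by rewrite lt0n.
pose y u := (if u \in U then h else 0)%R.
have hy : forall w, (\sum_u y u = \sum_(u | H w u) y u)%R.
  move=> w; rewrite -big_mkcond /= -big_mkcondr /=.
  rewrite sumr_const hev //.
  rewrite (eq_bigl (fun u => u \in [set u | H w u && (u \in U)])); last by move=> u; rewrite inE.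
  rewrite sumr_const hev //.
  case: (boolP (w \in U)) => hw.
    have -> : [set u | H w u && (u \in U)] = [set u | H w u].
      apply/setP => u; rewrite !inE; case: (boolP (H w u)) => //= hwu.
      by rewrite -(Ucl _ _ hwu).
    have hd1 : degree H w != 1.
      by move: hw; rewrite hU => /forall_inP; apply; rewrite inE connect0.
    move: (hdeg w) hd1; rewrite /degree -/H.
    by case: #|[set u | H w u]| => [|[|[|]]].
  have -> : [set u | H w u && (u \in U)] = set0.
    apply/setP => u; rewrite !inE; case: (boolP (H w u)) => //= hwu.
    by rewrite -(Ucl _ _ hwu) (negbTE hw).
  by rewrite cards0.
have := NAW_ker hl naw hy v; rewrite /y hvU => /eqP.
by rewrite (negbTE hne).
Qed.
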